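(* Let $\mathcal{T}$ be a projective Fraïssé family of finite trees whose distinguished epimorphisms are monotone and which allows splitting edges. Let $\mathbb{G}$ be its projective Fraïssé limit and $\pi\colon\mathbb{G}\to|\mathbb{G}|$ its topological realization. If $p\in|\mathbb{G}|$ is a ramification point of the dendrite $|\mathbb{G}|$, then there is a unique $p'\in\mathbb{G}$ with $\pi(p')=p$.
   Context: Graphs have reflexive symmetric edge relations; topological graphs carry a compact, Hausdorff, zero-dimensional, second countable topology with closed edge set; finite graphs are discrete. An epimorphism $g\colon B\to A$ of topological graphs is a continuous surjection with: $\langle a_1,a_2\rangle\in E(A)$ iff some $b_i\in g^{-1}(a_i)$ satisfy $\langle b_1,b_2\rangle\in E(B)$. A topological graph is disconnected if its vertex set splits into two nonempty disjoint closed sets with no edges between them, and connected otherwise (subsets carry the induced edges and subspace topology). An epimorphism is monotone if every fibre $g^{-1}(a)$ is connected. A finite tree is a finite connected graph without cycles of nontrivial edges. A projective Fraïssé family is a class of finite graphs with a distinguished class of epimorphisms, countably many up to isomorphism, containing identities, closed under composition, with the joint projection property (any $A,B$ have a common $C$ with distinguished epimorphisms onto both) and projective amalgamation (distinguished $f\colon B\to A$, $g\colon C\to A$ admit $D$ and distinguished $h\colon D\to B$, $k\colon D\to C$ with $f\circ h=g\circ k$). A Fraïssé sequence is a sequence $(F_n)$ in the family with compatible distinguished epimorphisms $f^m_n\colon F_m\to F_n$ such that every member of the family is the image of some $F_n$ under a distinguished epimorphism, and for every distinguished $f\colon A\to F_m$ there exist $n\ge m$ and distinguished $g\colon F_n\to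 A$ with $f\circ g=f^n_m$; the projective Fraïssé limit is $\varprojlim F_n\subseteq\prod F_n$ with $\langle x,y\rangle$ an edge iff $\langle x_n,y_n\rangle$ is an edge for all $n$ (unique up to isomorphism). The family allows splitting edges if for every member $G$ and every nontrivial edge $\{a,b\}$, the graph obtained by replacing this edge by a path $a,\ast,b$ through a new vertex $\ast$ is in the family, and both maps collapsing $\ast$ to $a$, resp. to $b$ (identity elsewhere) are distinguished epimorphisms. Under these hypotheses the limit $\mathbb{G}$ is a prespace (its edge relation is an equivalence relation); its topological realization is the quotient map $\pi\colon\mathbb{G}\to|\mathbb{G}|=\mathbb{G}/E(\mathbb{G})$, and $|\mathbb{G}|$ is a dendrite (a compact metrizable connected locally connected space in which any two points are joined by a unique arc). A point $x$ of a dendrite $X$ is a ramification point if $X\setminus\{x\}$ has more than two connected components. *)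

(* Defs.v *)
From HB Require Import structures.
From Stdlib Require Import Relations.
From mathcomp Require Import all_boot all_order.
From mathcomp Require Import all_classical.
From mathcomp Require Import topology_structure connected.

Set Implicit Arguments.
Unset Strict Implicit.
Unset Printing Implicit Defensive.


(** * Finite graphs: reflexive symmetric edge relation on a finite vertex set
      (finite graphs carry the discrete topology, so every map is continuous). *)
Record FinGraph := FGraph {
  fv : finType;
  fe : rel fv;
  fe_refl : reflexive fe;
  fe_sym : symmetric fe }.

Definition epimorphism (B A : FinGraph) (f : fv B -> fv A) : Prop :=
  (forall a : fv A, exists b : fv B, f b = a) /\
  (forall a1 a2 : fv A, @fe A a1 a2 <->
     exists b1 b2 : fv B, [/\ f b1 = a1, f b2 = a2 & @fe B b1 b2]).

Definition fg_connected (G : FinGraph) (S : {set fv G}) : Prop :=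
  ~ exists U W : {set fv G},
      [/\ (U :|: W = S)%SET, [disjoint U & W], (0 < #|U|)%N, (0 < #|W|)%N &
          forall u w, u \in U -> w \in W -> ~~ @fe G u w].

Definition monotone (B A : FinGraph) (f : fv B -> fv A) : Prop :=
  forall a : fv A, fg_connected [set b | f b == a]%SET.

Definition acyclic (G : FinGraph) : Prop :=
  ~ exists s : seq (fv G), [/\ (2 < size s)%N, uniq s & cycle (@fe G) s].

Definition ftree (G : FinGraph) : Prop := fg_connected [set: fv G]%SET /\ acyclic G.

Definition fg_iso (B A : FinGraph) (f : fv B -> fv A) : Prop :=
  bijective f /\ forall x y, @fe A (f x) (f y) = @fe B x y.

Record proj_fraisse_family (T : FinGraph -> Prop)
    (D : forall B A : FinGraph, (fv B -> fv A) -> Prop) : Prop := {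
  pff_epi : forall B A f, D B A f -> [/\ T B, T A & @epimorphism B A f];
  pff_countable : exists e : nat -> FinGraph,
      forall A, T A -> exists n (f : fv (e n) -> fv A), fg_iso f;
  pff_id : forall A, T A -> D A A id;
  pff_comp : forall C B A (f : fv B -> fv A) (g : fv C -> fv B),
      D B A f -> D C B g -> D C A (f \o g);
  pff_jpp : forall A B, T A -> T B ->
      exists C (f : fv C -> fv A) (g : fv C -> fv B), D C A f /\ D C B g;
  pff_amalg : forall A B C (f : fv B -> fv A) (g : fv C -> fv A),
      D B A f -> D C A g ->
      exists E (h : fv E -> fv B) (k : fv E -> fv C),
        [/\ D E B h, D E C k & forall x, f (h x) = g (k x)] }.

(** * Splitting an edge {a,b}: new vertex None, path a, None, b. *)
Section Split.
Variables (G : FinGraph) (a b : fv G).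

Definition split_e (x y : option (fv G)) : bool :=
  match x, y with
  | Some u, Some v =>
      @fe G u v && ((u == v) || ~~ (((u == a) && (v == b)) || ((u == b) && (v == a))))
  | None, None => true
  | None, Some v => (v == a) || (v == b)
  | Some v, None => (v == a) || (v == b)
  end.

Lemma split_e_refl : reflexive split_e.
Proof. by case=> [u|] //=; rewrite fe_refl eqxx. Qed.

Lemma split_e_sym : symmetric split_e.
Proof.
case=> [u|] [v|] //=; rewrite fe_sym [v == u]eq_sym; congr (_ && (_ || ~~ _)).
by case: (u == a); case: (v == b); case: (u == b); case: (v == a).
Qed.

Definition split_graph : FinGraph :=
  @FGraph (option (fv G)) split_e split_e_refl split_e_sym.

Definition collapse (c : fv G) (x : fv split_graph) : fv G :=
  if x is Some v then v else c.
End Split.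

Definition allows_splitting (T : FinGraph -> Prop)
    (D : forall B A : FinGraph, (fv B -> fv A) -> Prop) : Prop :=
  forall G, T G -> forall a b : fv G, a != b -> @fe G a b ->
    [/\ T (split_graph a b), D (split_graph a b) G (@collapse G a b a)
        & D (split_graph a b) G (@collapse G a b b)].

Fixpoint fcomp (F : nat -> FinGraph) (g : forall n, fv (F n.+1) -> fv (F n))
    (m k : nat) : fv (F (k + m)%coq_nat) -> fv (F m) :=
  match k return fv (F (k + m)%coq_nat) -> fv (F m) with
  | 0 => fun x => x
  | k'.+1 => fun x => @fcomp F g m k' (g (k' + m)%coq_nat x)
  end.

Record fraisse_seq (T : FinGraph -> Prop)
    (D : forall B A : FinGraph, (fv B -> fv A) -> Prop)
    (F : nat -> FinGraph) (g : forall n, fv (F n.+1) -> fv (F n)) : Prop := {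
  fs_mem : forall n, T (F n);
  fs_dist : forall n, D (F n.+1) (F n) (g n);
  fs_univ : forall A, T A -> exists n (h : fv (F n) -> fv A), D (F n) A h;
  fs_proj : forall m A (f : fv A -> fv (F m)), D A (F m) f ->
      exists k (h : fv (F (k + m)%coq_nat) -> fv A),
        D (F (k + m)%coq_nat) A h /\ forall x, f (h x) = @fcomp F g m k x }.

Local Open Scope classical_set_scope.
Section Limit.
Variables (F : nat -> FinGraph) (g : forall n, fv (F n.+1) -> fv (F n)).

Definition thread : Type :=
  {x : forall n, fv (F n) | forall n, @g n (x n.+1) = x n}.

HB.instance Definition _ := gen_eqMixin thread.
HB.instance Definition _ := gen_choiceMixin thread.

(** product topology (of discrete spaces) restricted to the threads *)
Definition thread_open (U : set thread) : Prop :=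
  forall x, U x -> exists n, forall y : thread,
    (forall i, (i < n)%N -> proj1_sig y i = proj1_sig x i) -> U y.

Lemma thread_openT : thread_open setT.
Proof. by move=> x _; exists 0%N. Qed.

Lemma thread_openI : setI_closed thread_open.
Proof.
move=> U V oU oV x [Ux Vx].
have [n Hn] := oU x Ux; have [m Hm] := oV x Vx.
exists (maxn n m) => y Hy; split.
- by apply: Hn => i lt; apply: Hy; rewrite leq_max lt.
- by apply: Hm => i lt; apply: Hy; rewrite leq_max lt orbT.
Qed.

Lemma thread_open_bigU (I : Type) (f : I -> set thread) :
  (forall i, thread_open (f i)) -> thread_open (\bigcup_i f i).
Proof.
move=> oF x [i _ fxi]; have [n Hn] := oF i x fxi.
by exists n => y Hy; exists i => //; apply: Hn.
Qed.

HB.instance Definition _ :=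
  isOpenTopological.Build thread thread_openT thread_openI thread_open_bigU.

Definition lim_edge (x y : thread) : Prop :=
  forall n, @fe (F n) (proj1_sig x n) (proj1_sig y n).

(** equivalence relation generated by the edge relation (the edge relation
    itself, since the limit is a prespace) *)
Definition lim_equiv : relation thread := clos_refl_sym_trans thread lim_edge.

Definition realization : Type :=
  {S : set thread | exists x, S = [set y | lim_equiv x y]}.

HB.instance Definition _ := gen_eqMixin realization.
HB.instance Definition _ := gen_choiceMixin realization.

Definition realize (x : thread) : realization :=
  exist _ [set y | lim_equiv x y] (ex_intro _ x erefl).

Definition real_open (U : set realization) : Prop := open (realize @^-1` U).

Lemma real_openT : real_open setT.
Proof. by rewrite /real_open preimage_setT; exact: openT. Qed.

Lemma real_openI : setI_closed real_open.
Proof. by move=> U V oU oV; rewrite /real_open preimage_setI; exact: openI. Qed.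

Lemma real_open_bigU (I : Type) (f : I -> set realization) :
  (forall i, real_open (f i)) -> real_open (\bigcup_i f i).
Proof. by move=> oF; rewrite /real_open preimage_bigcup; apply: bigcup_open => i _; exact: oF. Qed.

HB.instance Definition _ :=
  isOpenTopological.Build realization real_openT real_openI real_open_bigU.
End Limit.

Definition ramification_point (X : topologicalType) (p : X) : Prop :=
  exists a b c : X,
    [/\ (~` [set p]) a, (~` [set p]) b & (~` [set p]) c] /\
    [/\ ~ connected_component (~` [set p]) a b,
        ~ connected_component (~` [set p]) a c &
        ~ connected_component (~` [set p]) b c].

(* Main.v *)
Require Import Defs.
From HB Require Import structures.
From Stdlib Require Import Relations Eqdep_dec PeanoNat.
From mathcomp Require Import all_boot all_order.
From mathcomp Require Import all_classical.
From mathcomp Require Import topology_structure connected.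
Set Implicit Arguments.
Unset Strict Implicit.
Unset Printing Implicit Defensive.

Lemma build_seq (X : nat -> Type) (P : forall n, X n -> Prop)
  (R : forall n, X n.+1 -> X n -> Prop) :
  (exists x0, P 0 x0) ->
  (forall n x, P n x -> exists y, P n.+1 y /\ R n y x) ->
  exists f : forall n, X n, forall n, P n (f n) /\ R n (f n.+1) (f n).
Proof.
move=> [x0 Px0] hs.
have hs' : forall n (s : {x | P n x}), {y | P n.+1 y /\ R n y (sval s)}.
  by move=> n [x Px]; apply: cid; exact: hs.
pose fix bs n : {x | P n x} := match n with
  | 0 => exist _ x0 Px0
  | n'.+1 => exist _ (sval (hs' n' (bs n'))) (proj1 (svalP (hs' n' (bs n'))))
  end.
exists (fun n => sval (bs n)) => n; split; first exact: svalP.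
exact: (proj2 (svalP (hs' n (bs n)))).
Qed.

Lemma pigeon (T : finType) (Q : nat -> Prop) (f : nat -> T) :
  (forall M, exists K, (M <= K)%N /\ Q K) ->
  exists t, forall M, exists K, [/\ (M <= K)%N, Q K & f K = t].
Proof.
move=> hQ; apply: contrapT => hn.
have hn' : forall t, exists M, forall K, (M <= K)%N -> Q K -> f K <> t.
  move=> t; apply: contrapT => ht; apply: hn; exists t => M.
  apply: contrapT => hM; apply: ht; exists M => K MK QK fK.
  by apply: hM; exists K.
have [Mf hMf] := choice hn'.
have [K [MK QK]] := hQ (\max_(t : T) Mf t).
apply: (hMf (f K) K) => //.
apply: leq_trans MK; exact: (leq_bigmax (f K)).
Qed.

Section Lim.
Variables (F : nat -> FinGraph) (g : forall n, fv (F n.+1) -> fv (F n)).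

Definition co (z : thread g) n : fv (F n) := proj1_sig z n.

Lemma coP (z : thread g) n : g (co z n.+1) = co z n.
Proof. exact: (proj2_sig z n). Qed.

Lemma thread_eq (z z' : thread g) : (forall n, co z n = co z' n) -> z = z'.
Proof.
move: z z' => [z hz] [z' hz'] /= H.
have E : z = z' by apply: functional_extensionality_dep.
subst z'; congr exist; exact: Prop_irrelevance.
Qed.

Lemma agree_down (z z' : thread g) N : co z N = co z' N ->
  forall i, (i <= N)%N -> co z i = co z' i.
Proof.
move=> H i; elim: N H => [|N IH] H.
  by rewrite leqn0 => /eqP ->.
rewrite leq_eqVlt => /orP [/eqP -> //|]; rewrite ltnS; apply: IH.
by rewrite -coP H coP.
Qed.

Lemma differ_up (z z' : thread g) i N : co z i <> co z' i -> (i <= N)%N ->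
  co z N <> co z' N.
Proof. by move=> H iN E; apply: H; apply: agree_down E _ iN. Qed.

Lemma fcomp_co (z : thread g) m k : fcomp g (sval z (k + m)%coq_nat) = co z m.
Proof.
elim: k => [//|k IH] /=.
by rewrite (proj2_sig z (k + m)%coq_nat) IH.
Qed.


Fixpoint below (i j : nat) : fv (F j) -> fv (F i) -> Prop :=
  match j as j0 return fv (F j0) -> fv (F i) -> Prop with
  | 0 => fun x y => existT (fun k => fv (F k)) 0 x = existT _ i y
  | j'.+1 => fun x y => existT (fun k => fv (F k)) j'.+1 x = existT _ i y
                        \/ @below i j' (g x) y
  end.
Arguments below : clear implicits.

Lemma exT_inj n (x y : fv (F n)) :
  existT (fun k => fv (F k)) n x = existT _ n y -> x = y.
Proof. exact: (inj_pair2_eq_dec _ Nat.eq_dec). Qed.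

Lemma below_le i j x y : below i j x y -> (i <= j)%N.
Proof.
elim: j x => [|j IH] x /=.
  by move/(congr1 (@projT1 _ _)) => /= <-.
case=> [/(congr1 (@projT1 _ _)) /= <- //|/IH]; exact: leqW.
Qed.

Lemma below_same i x y : below i i x y -> x = y.
Proof.
case: i x y => [|i] x y /=.
  by move/exT_inj.
case=> [/exT_inj //|/below_le].
by rewrite ltnn.
Qed.

Lemma below_det i j x y y' : below i j x y -> below i j x y' -> y = y'.
Proof.
elim: j x => [|j IH] x.
  move=> H1 H2; have E : i = 0 by move: (below_le H1); rewrite leqn0 => /eqP.
  by subst i; rewrite -(below_same H1) (below_same H2).
move=> H1 H2; case: (eqVneq i j.+1) => E.
  by subst i; rewrite -(below_same H1) (below_same H2).
move: H1 H2 => /= [/(congr1 (@projT1 _ _)) /= E1|H1]; first by rewrite E1 eqxx in E.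
case=> [/(congr1 (@projT1 _ _)) /= E1|H2]; first by rewrite E1 eqxx in E.
exact: IH H1 H2.
Qed.

Lemma below_ex i j x : (i <= j)%N -> exists y, below i j x y.
Proof.
elim: j x => [|j IH] x.
  rewrite leqn0 => /eqP E; subst i; by exists x.
rewrite leq_eqVlt => /orP [/eqP E|]; first by subst i; exists x; left.
rewrite ltnS => /(IH (g x)) [y Hy]; exists y; by right.
Qed.

Lemma below_g n j x b : below n.+1 j x b -> below n j x (g b).
Proof.
elim: j x => [|j IH] x /=.
  by move/(congr1 (@projT1 _ _)).
case=> [E|/IH H]; last by right.
have E1 := congr1 (@projT1 _ _) E; case: E1 => E1; subst j.
have E2 := exT_inj E; subst b.
right; case: n x {E IH} => [|n] x /=; first by [].
by left.
Qed.

Lemma below_thread (z : thread g) i j : (i <= j)%N -> below i j (co z j) (co z i).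
Proof.
elim: j => [|j IH].
  rewrite leqn0 => /eqP E; subst i => /=; by [].
rewrite leq_eqVlt => /orP [/eqP E|]; first by subst i; left.
by rewrite ltnS => /IH H; right; rewrite coP.
Qed.

Lemma below_edge (hg : forall n, epimorphism (@g n)) i j x x' y y' :
  below i j x y -> below i j x' y' -> fe x x' -> fe y y'.
Proof.
elim: j x x' => [|j IH] x x' H1 H2.
  have E : i = 0 by move: (below_le H1); rewrite leqn0 => /eqP.
  by subst i; rewrite -(below_same H1) -(below_same H2).
case: (eqVneq i j.+1) => E.
  by subst i; rewrite -(below_same H1) -(below_same H2).
move: H1 H2 => /= [/(congr1 (@projT1 _ _)) /= E1|H1]; first by rewrite E1 eqxx in E.
case=> [/(congr1 (@projT1 _ _)) /= E1|H2]; first by rewrite E1 eqxx in E.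
move=> e; apply: IH H1 H2 _.
have [_ hE] := hg j; apply/hE; by exists x, x'.
Qed.


Lemma epi_edge B A (f : fv B -> fv A) : epimorphism f ->
  forall b1 b2, fe b1 b2 -> fe (f b1) (f b2).
Proof. by move=> [_ hE] b1 b2 e; apply/hE; exists b1, b2. Qed.

Definition Pv N n (a : fv (F n)) (v : fv (F N)) :=
  ((n <= N)%N -> below n N v a) /\ ((N <= n)%N -> below N n a v).

Lemma Pv_start N (v : fv (F N)) a : below 0 N v a -> Pv a v.
Proof.
move=> H; split=> // N0; have E : N = 0 by move: N0; rewrite leqn0 => /eqP.
subst N; rewrite -(below_same H); by [].
Qed.

Lemma Pv_up N n (v : fv (F N)) (a : fv (F n)) b :
  (n < N)%N -> below n.+1 N v b -> Pv b v.
Proof.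
move=> nN H; split=> // Nn.
have E : N = n.+1 by apply/eqP; rewrite eqn_leq Nn nN.
subst N; rewrite -(below_same H); by left.
Qed.

Lemma lift_edge (hg : forall n, epimorphism (@g n)) N (v1 v2 : fv (F N)) :
  fe v1 v2 -> exists z1 z2 : thread g,
    [/\ lim_edge z1 z2, co z1 N = v1 & co z2 N = v2].
Proof.
move=> e12.
pose P n (ab : fv (F n) * fv (F n)) :=
  [/\ fe ab.1 ab.2, Pv ab.1 v1 & Pv ab.2 v2].
pose R n (ab' : fv (F n.+1) * fv (F n.+1)) (ab : fv (F n) * fv (F n)) :=
  g ab'.1 = ab.1 /\ g ab'.2 = ab.2.
have [f Hf] : exists f : forall n, fv (F n) * fv (F n),
    forall n, P n (f n) /\ R n (f n.+1) (f n).
  apply: build_seq.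
    have [a Ha] := @below_ex 0 N v1 (leq0n N).
    have [b Hb] := @below_ex 0 N v2 (leq0n N).
    exists (a, b); split => /=; [exact: (below_edge hg Ha Hb e12)|exact: Pv_start|exact: Pv_start].
  move=> n [a b] [/= eab [Ha1 Ha2] [Hb1 Hb2]].
  case: (ltnP n N) => nN.
    have [a' Ha'] := @below_ex n.+1 N v1 nN.
    have [b' Hb'] := @below_ex n.+1 N v2 nN.
    exists (a', b'); split; split => /=.
    - exact: (below_edge hg Ha' Hb' e12).
    - exact: Pv_up nN Ha'.
    - exact: Pv_up nN Hb'.
    - exact: below_det (below_g Ha') (Ha1 (ltnW nN)).
    - exact: below_det (below_g Hb') (Hb1 (ltnW nN)).
  have [a' [b' [ga gb eab']]] : exists a' b', [/\ g a' = a, g b' = b & fe a' b'].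
    by have [_ hE] := hg n; have [a' [b' []]] := (proj1 (hE a b) eab); exists a', b'.
  exists (a', b'); split; split => /=; rewrite ?ga ?gb //.
  - split => [|_]; first by move=> H; move: (leq_trans H nN); rewrite ltnn.
    by right; rewrite ga; apply: Ha2.
  - split => [|_]; first by move=> H; move: (leq_trans H nN); rewrite ltnn.
    by right; rewrite gb; apply: Hb2.
have h1 : forall n, g (f n.+1).1 = (f n).1 by move=> n; case: (Hf n) => _ [].
have h2 : forall n, g (f n.+1).2 = (f n).2 by move=> n; case: (Hf n) => _ [].
exists (exist _ (fun n => (f n).1) h1), (exist _ (fun n => (f n).2) h2); split.
- by move=> n /=; case: (Hf n) => [[]].
- case: (Hf N) => [[_ [H _] _]] _; rewrite /co /=; symmetry; exact: below_same (H (leqnn N)).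
- case: (Hf N) => [[_ _ [H _]]] _; rewrite /co /=; symmetry; exact: below_same (H (leqnn N)).
Qed.


Lemma unif_level (U : set (thread g)) :
  (forall z, U z -> exists n, forall y,
      (forall i, (i < n)%N -> co y i = co z i) -> U y) ->
  (forall z, ~ U z -> exists n, forall y,
      (forall i, (i < n)%N -> co y i = co z i) -> ~ U y) ->
  exists N, forall z z', co z N = co z' N -> U z -> U z'.
Proof.
move=> hU hW; apply: contrapT => hn.
have hs : forall N, exists zz : thread g * thread g,
    [/\ co zz.1 N = co zz.2 N, U zz.1 & ~ U zz.2].
  move=> N; apply: contrapT => hN; apply: hn; exists N => z z' E Uz.
  apply: contrapT => Uz'; apply: hN; by exists (z, z').
have [s Hs] := choice hs.
pose P n (v : fv (F n)) := forall M, exists K, (M <= K)%N /\ co (s K).1 n = v.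
pose R n (w : fv (F n.+1)) (v : fv (F n)) := g w = v.
have [f Hf] : exists f : forall n, fv (F n), forall n, P n (f n) /\ R n (f n.+1) (f n).
  apply: build_seq.
    have [v Hv] := @pigeon _ (fun _ => True) (fun K => co (s K).1 0)
                     (fun M => ex_intro _ M (conj (leqnn M) I)).
    exists v => M; have [K [MK _ E]] := Hv M; by exists K.
  move=> n v Pv0.
  have [w Hw] := @pigeon _ (fun K => co (s K).1 n = v) (fun K => co (s K).1 n.+1) Pv0.
  exists w; split.
    move=> M; have [K [MK _ E]] := Hw M; by exists K.
  have [K [_ E1 E2]] := Hw 0; rewrite /R -E2 coP //.
have hf : forall n, g (f n.+1) = f n by move=> n; case: (Hf n).
pose w : thread g := exist _ f hf.
have agr : forall n1 K (y : thread g), (n1 <= K)%N -> co (s K).1 K = co y K ->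
    co (s K).1 n1 = co w n1 -> forall i, (i < n1)%N -> co y i = co w i.
  move=> n1 K y n1K E1 E2 i iN.
  rewrite -(agree_down E1 (leq_trans (ltnW iN) n1K)).
  apply: agree_down E2 _ (ltnW iN).
case: (pselect (U w)) => Uw.
  have [n1 Hn1] := hU w Uw.
  have [K [n1K EK]] := (proj1 (Hf n1)) n1.
  have [E _ nU] := Hs K.
  by apply: nU; apply: Hn1; apply: agr n1K E EK.
have [n1 Hn1] := hW w Uw.
have [K [n1K EK]] := (proj1 (Hf n1)) n1.
have [E U1 _] := Hs K.
apply: (Hn1 (s K).1) U1 => i iN.
exact: (agr n1 K (s K).1 n1K erefl EK i iN).
Qed.

End Lim.

Lemma disjP (T : finType) (A B : {set T}) :
  (forall x, x \in A -> x \in B -> False) -> [disjoint A & B].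
Proof.
move=> H; rewrite -setI_eq0; apply/eqP/setP => x; rewrite !inE.
by apply/negbTE/negP => /andP [] /H H' /H'.
Qed.

Lemma preim_conn B A (f : fv B -> fv A) : epimorphism f -> monotone f ->
  forall Q : {set fv A}, fg_connected Q -> fg_connected [set b | f b \in Q].
Proof.
move=> [surj hE] mon Q cQ [U [W [UW dUW U0 W0 noE]]].
have inP : forall b, (b \in U) || (b \in W) = (f b \in Q).
  by move=> b; rewrite -finset.in_setU UW inE.
have key : forall u w, u \in U -> w \in W -> f u <> f w.
  move=> u w uU wW E; apply: (mon (f u)).
  exists [set b in U | f b == f u], [set b in W | f b == f u]; split.
  - apply/setP => b; rewrite !inE; case: (f b =P f u) => [Efb|_]; rewrite ?andbT ?andbF //.
    by rewrite inP Efb -(inP u) uU.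
  - apply/disjP => b; rewrite !inE => /andP [bU _] /andP [bW _].
    by move: (disjointFr dUW bU); rewrite bW.
  - by apply/card_gt0P; exists u; rewrite !inE uU eqxx.
  - by apply/card_gt0P; exists w; rewrite !inE wW E eqxx.
  - by move=> b1 b2; rewrite !inE => /andP [b1U _] /andP [b2W _]; apply: noE.
apply: cQ; exists (f @: U), (f @: W); split.
- apply/setP => q; rewrite finset.in_setU; apply/idP/idP.
    case/orP => /imsetP [b bU ->]; by rewrite -inP bU ?orbT.
  move=> qQ; have [b fb] := surj q; rewrite -fb -inP in qQ.
  by case/orP: qQ => H; [rewrite -fb (imset_f f H)|rewrite -fb (imset_f f H) orbT].
- apply/disjP => q /imsetP [u uU ->] /imsetP [w wW E].
  exact: key uU wW E.
- by have /card_gt0P [u uU] := U0; apply/card_gt0P; exists (f u); apply: imset_f.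
- by have /card_gt0P [u uU] := W0; apply/card_gt0P; exists (f u); apply: imset_f.
- move=> q1 q2 /imsetP [u1 u1U ->] /imsetP [w2 w2W ->]; apply/negP => e.
  have [b1 [b2 [E1 E2 e12]]] := proj1 (hE _ _) e.
  have b1Q : (b1 \in U) || (b1 \in W) by rewrite inP E1 -inP u1U.
  have b2Q : (b2 \in U) || (b2 \in W) by rewrite inP E2 -inP w2W orbT.
  case/orP: b1Q => b1U; last by apply: (key u1 b1) => //.
  case/orP: b2Q => b2W; first by apply: (key b2 w2) => //.
  by move: (noE _ _ b1U b2W); rewrite e12.
Qed.

Lemma sig_eq (A : Type) (P : A -> Prop) (u v : {x | P x}) : sval u = sval v -> u = v.
Proof. case: u v => [a pa] [b pb] /= E; subst b; congr exist; exact: Prop_irrelevance. Qed.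

Section Lim2.
Variables (F : nat -> FinGraph) (g : forall n, fv (F n.+1) -> fv (F n)).

Lemma realize_eq (x y : thread g) : lim_equiv x y -> realize x = realize y.
Proof.
move=> H; apply: sig_eq => /=; apply: funext => z; apply: propext; split => Hz.
  apply: rst_trans Hz; exact: rst_sym.
exact: rst_trans H Hz.
Qed.

Lemma realize_inv (x y : thread g) : realize x = realize y -> lim_equiv x y.
Proof.
move=> /(congr1 sval) /= E.
have := congr1 (fun S : set (thread g) => S y) E => /= ->; exact: rst_refl.
Qed.

Lemma realize_surj (p : realization g) : exists x, realize x = p.
Proof.
case: p => S [x Sx]; exists x; apply: sig_eq => /=; by rewrite Sx.
Qed.

End Lim2.

Section Conn.
Variables (F : nat -> FinGraph) (g : forall n, fv (F n.+1) -> fv (F n)).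
Local Open Scope classical_set_scope.

Lemma open_thread (U : set (thread g)) : open U -> forall z, U z ->
  exists n, forall y, (forall i, (i < n)%N -> co y i = co z i) -> U y.
Proof. by move=> oU z Uz; have [n Hn] := oU z Uz; exists n. Qed.

Lemma open_real (O : set (realization g)) : open O -> forall z, O (realize z) ->
  exists n, forall y : thread g, (forall i, (i < n)%N -> co y i = co z i) -> O (realize y).
Proof. by move=> oO z Oz; have [n Hn] := oO z Oz; exists n. Qed.

Lemma conn_image (hg : forall n, epimorphism (@g n))
  (hfc : forall m k, epimorphism (@fcomp F g m k) /\ monotone (@fcomp F g m k))
  m (Q : {set fv (F m)}) : fg_connected Q ->
  connected ((@realize F g) @` [set z : thread g | co z m \in Q]).
Proof.
move=> cQ B [r0 Br0] [O oO BO] [C cC BC].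
set Kt := [set z : thread g | co z m \in Q].
set Im := (@realize F g) @` Kt.
apply: contrapT => nB.
have [w [Imw nBw]] : exists w, Im w /\ ~ B w.
  apply: contrapT => hn; apply: nB; apply/seteqP; split.
    by rewrite BO => x [].
  by move=> x Imx; apply: contrapT => nBx; apply: hn; exists x.
pose U := fun z : thread g => Kt z /\ O (realize z).
have oCc : open (~` C) by exact: closed_openC.
have hU : forall z, U z -> exists n, forall y,
    (forall i, (i < n)%N -> co y i = co z i) -> U y.
  move=> z [Kz Oz]; have [n1 Hn1] := open_real oO Oz.
  exists (maxn n1 m.+1) => y Hy; split.
    by rewrite /Kt /= Hy // leq_max leqnn orbT.
  by apply: Hn1 => i iN; apply: Hy; rewrite leq_max iN.
have hW : forall z, ~ U z -> exists n, forall y,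
    (forall i, (i < n)%N -> co y i = co z i) -> ~ U y.
  move=> z nUz; case: (pselect (Kt z)) => Kz; last first.
    by exists m.+1 => y Hy [Ky _]; apply: Kz; rewrite /Kt /= -Hy.
  have nOz : ~ O (realize z) by move=> Oz; apply: nUz.
  have nCz : ~ C (realize z).
    move=> Cz; apply: nOz; have : B (realize z) by rewrite BC; split => //; exists z.
    by rewrite BO => -[].
  have [n2 Hn2] := open_real oCc nCz.
  exists (maxn n2 m.+1) => y Hy [Ky Oy].
  have : B (realize y) by rewrite BO; split => //; exists y.
  rewrite BC => -[_]; apply: Hn2 => i iN; apply: Hy; by rewrite leq_max iN.
have [N0 HN0] := unif_level hU hW.
pose L := (N0 + m)%coq_nat.
have HL : forall z z', co z L = co z' L -> U z -> U z'.
  move=> z z' E; apply: HN0; apply: agree_down E _ _; exact: leq_addr.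
have [fe1 fm1] := hfc m N0.
pose Q' := [set v | @fcomp F g m N0 v \in Q]%SET.
have cQ' : fg_connected Q' := preim_conn fe1 fm1 cQ.
have inQ' : forall z : thread g, (co z L \in Q') = (co z m \in Q).
  move=> z; rewrite inE; congr (_ \in Q); exact: (fcomp_co z m N0).
apply: cQ'.
exists [set v in Q' | `[< exists z, U z /\ co z L = v >] ]%SET,
       [set v in Q' | ~~ `[< exists z, U z /\ co z L = v >] ]%SET; split.
- apply/setP => v; rewrite !inE; case: (_ \in Q) => //=; exact: orbN.
- apply/disjP => v; rewrite !inE => /andP [_ ->] /andP [_].
  by [].
- have : B r0 := Br0; rewrite {1}BO => -[[z1 Kz1 E1] Or0]; subst r0.
  apply/card_gt0P; exists (co z1 L); rewrite !inE; apply/andP; split.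
    by have := inQ' z1; rewrite inE => ->.
  by apply/asboolP; exists z1.
- case: Imw nBw => z2 Kz2 E2 nBw; subst w.
  apply/card_gt0P; exists (co z2 L); rewrite !inE; apply/andP; split.
    by have := inQ' z2; rewrite inE => ->.
  apply/negP => /asboolP [z [Uz Ez]].
  have U2 : U z2 := HL z z2 Ez Uz.
  by apply: nBw; rewrite BO; split; [exists z2|exact: (proj2 U2)].
- move=> v1 v2; rewrite !inE => /andP [q1 /asboolP [z [Uz Ez]]] /andP [q2 nv2].
  apply/negP => e.
  have [z1 [z2 [le E1 E2]]] := lift_edge hg e.
  have U1 : U z1 by apply: (HL z z1) => //; rewrite Ez E1.
  have Re : realize z1 = realize z2 by apply: realize_eq; apply: rst_step.
  have U2 : U z2.
    split; last by rewrite -Re; exact: (proj2 U1).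
    by rewrite /Kt /= -inQ' E2 inE.
  by move/negP: nv2; apply; apply/asboolP; exists z2.
Qed.

End Conn.

Definition ered (G : FinGraph) (a b : fv G) : rel (option (fv G)) :=
  fun s t => [&& s != None, t != None & split_e a b s t].

Lemma ered_sym (G : FinGraph) (a b : fv G) : symmetric (ered a b).
Proof. by move=> s t; rewrite /ered split_e_sym andbCA andbA. Qed.

Lemma ered_swap (G : FinGraph) (a b : fv G) : ered a b =2 ered b a.
Proof.
move=> [u|] [v|] //=; rewrite /ered /=.
by rewrite [X in ~~ X]orbC.
Qed.

Lemma class_in (T : finType) (r : rel T) (s0 : T) (X : pred T) :
  (forall x y, X x -> r x y -> X y) -> X s0 -> forall t, connect r s0 t -> X t.
Proof.
move=> cl X0 t /connectP [p Hp ->]; elim: p s0 X0 Hp => //= y p IH x Xx /andP [rxy Hp].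
exact: IH (cl _ _ Xx rxy) Hp.
Qed.

Lemma conn_class (G : FinGraph) (r : rel (fv G)) (s0 : fv G) :
  (forall x y, r x y -> fe x y) -> fg_connected [set t | connect r s0 t].
Proof.
move=> rfe [U [W [UW dUW U0 W0 noE]]].
have inUW : forall t, connect r s0 t = (t \in U) || (t \in W).
  by move=> t; rewrite -finset.in_setU UW inE.
have key : forall (X Y : {set fv G}), (forall x y, x \in X -> y \in Y -> ~~ fe x y) ->
    (forall t, connect r s0 t = (t \in X) || (t \in Y)) -> s0 \in X ->
    forall t, connect r s0 t -> t \in X.
  move=> X Y nXY cXY sX t ct.
  suff : connect r s0 t && (t \in X) by case/andP.
  apply: (@class_in _ r s0 (fun t => connect r s0 t && (t \in X))) ct.
  - move=> x y /andP [cx xX] rxy.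
    have cy : connect r s0 y by apply: connect_trans cx (connect1 rxy).
    rewrite cy /=; move: cy; rewrite cXY => /orP [//|yY].
    by move: (nXY _ _ xX yY); rewrite rfe.
  - by rewrite connect0 sX.
have s0in : (s0 \in U) || (s0 \in W) by rewrite -inUW connect0.
case/orP: s0in => s0X.
  have /card_gt0P [w wW] := W0.
  have cw : connect r s0 w by rewrite inUW wW orbT.
  by move: (disjointFl dUW wW); rewrite (key U W noE inUW s0X w cw).
have /card_gt0P [u uU] := U0.
have cu : connect r s0 u by rewrite inUW uU.
have nWU : forall x y, x \in W -> y \in U -> ~~ fe x y.
  by move=> x y xW yU; rewrite fe_sym; apply: noE.
have inWU : forall t, connect r s0 t = (t \in W) || (t \in U).
  by move=> t; rewrite inUW orbC.
by move: (disjointFr dUW uU); rewrite (key W U nWU inWU s0X u cu).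
Qed.

Lemma S_cover (G : FinGraph) (a b : fv G) :
  fg_connected [set: fv (split_graph a b)]%SET -> forall v,
  connect (ered a b) (Some v) (Some a) || connect (ered a b) (Some v) (Some b).
Proof.
move=> cS v; apply/idPn => nv; apply: cS.
pose cl (t : option (fv G)) :=
  [|| t == None, connect (ered a b) t (Some a) | connect (ered a b) t (Some b)].
exists [set t | cl t]%SET, [set t | ~~ cl t]%SET; split.
- by apply/setP => t; rewrite !inE orbN.
- by apply/disjP => t; rewrite !inE => ->.
- by apply/card_gt0P; exists None; rewrite inE /cl eqxx.
- by apply/card_gt0P; exists (Some v); rewrite inE /cl /=.
- move=> s t; rewrite !inE => cs nct; apply/negP => e.
  move: nct; rewrite /cl; case: t e => [w|] e; last by rewrite eqxx.
  case: s cs e => [u|] /= cs e.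
    have ew : ered a b (Some w) (Some u).
      rewrite /ered /=; move: e; rewrite (@fe_sym G w u) [w == u]eq_sym [X in ~~ X]orbC [(w == b) && _]andbC [(w == a) && _]andbC; exact. 
    move/negP; apply.
    by case/or3P: cs => [//|cs|cs]; rewrite (connect_trans (connect1 ew) cs) ?orbT.
  move/negP; apply.
  by case/orP: e => /eqP ->; rewrite connect0 ?orbT.
Qed.

Lemma connect_None (G : FinGraph) (a b : fv G) s :
  connect (ered a b) s None -> s = None.
Proof.
case/connectP => p; case/lastP: p => [|p y] /=; first by move=> _ ->.
rewrite rcons_path last_rcons => /andP [_ e] E; subst y.
by move: e; rewrite /ered andbC /=.
Qed.

Lemma path_notNone (G : FinGraph) (a b : fv G) x p :
  path (ered a b) x p -> None \notin p.
Proof.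
elim: p x => //= y p IH x /andP [e Hp]; rewrite in_cons negb_or (IH _ Hp) andbT.
by move: e; rewrite /ered => /and3P [_ ? _]; rewrite eq_sym.
Qed.

Lemma S_sep (G : FinGraph) (a b : fv G) :
  acyclic (split_graph a b) -> a != b ->
  ~~ connect (ered a b) (Some a) (Some b).
Proof.
move=> ac ab; apply/negP => /connectP [p Hp Ep].
case: (shortenP Hp) Ep => p' Hp' up' _ Ep.
apply: ac; exists [:: None, Some a & p']; split.
- case: p' {Hp' up'} Ep => [[]|y p'] /=; last by [].
  by move=> E; rewrite E eqxx in ab.
- rewrite cons_uniq up' andbT in_cons /=.
  by rewrite (path_notNone Hp').
- rewrite /cycle rcons_cons /= eqxx /=.
  rewrite rcons_path -Ep /= eqxx orbT andbT.
  by apply: sub_path Hp' => s t /and3P [].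
Qed.

Lemma collapse_some (G : FinGraph) (a b t : fv G) (s : option (fv G)) v :
  @collapse G a b t s = v -> v <> t -> s = Some v.
Proof. by case: s => [u /= -> //|/= ->]. Qed.

Lemma thread_neq (F : nat -> FinGraph) (g : forall n, fv (F n.+1) -> fv (F n))
  (z z' : thread g) : z <> z' -> exists i, forall n, (i <= n)%N -> co z n <> co z' n.
Proof.
move=> ne; have [i Hi] : exists i, co z i <> co z' i.
  apply: contrapT => hn; apply: ne; apply: thread_eq => i.
  by apply: contrapT => H; apply: hn; exists i.
by exists i => n iN; apply: differ_up Hi iN.
Qed.

Lemma lim_edge_sym (F : nat -> FinGraph) (g : forall n, fv (F n.+1) -> fv (F n))
  (x y : thread g) : lim_edge x y -> lim_edge y x.
Proof. by move=> H n; rewrite fe_sym. Qed.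

Section Main.
Variables (T : FinGraph -> Prop) (D : forall B A : FinGraph, (fv B -> fv A) -> Prop)
  (F : nat -> FinGraph) (g : forall n, fv (F n.+1) -> fv (F n)).
Hypotheses (hP : proj_fraisse_family T D) (hT : forall A, T A -> ftree A)
  (hM : forall B A f, @D B A f -> monotone f) (hS : allows_splitting T D)
  (hF : fraisse_seq T D g).

Lemma hg n : epimorphism (@g n).
Proof. by have [] := pff_epi hP (fs_dist hF n). Qed.

Lemma D_fcomp m k : @D (F (k + m)%coq_nat) (F m) (@fcomp F g m k).
Proof.
elim: k => [|k IH]; first exact: (pff_id hP (fs_mem hF m)).
exact: (pff_comp hP IH (fs_dist hF (k + m)%coq_nat)).
Qed.

Lemma hfc m k : epimorphism (@fcomp F g m k) /\ monotone (@fcomp F g m k).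
Proof.
split; last exact: hM (D_fcomp m k).
by have [] := pff_epi hP (D_fcomp m k).
Qed.

Lemma split_facts n (x y : fv (F n)) t : x != y -> fe x y -> t = x \/ t = y ->
  exists k (h : fv (F (k + n)%coq_nat) -> fv (split_graph x y)),
    [/\ @D _ _ h, epimorphism h & forall w, @collapse _ x y t (h w) = fcomp g w].
Proof.
move=> xy e ht.
have [_ Dx Dy] := hS (fs_mem hF n) xy e.
have Dt : @D _ _ (@collapse _ x y t) by case: ht => ->.
have [k [h [Dh Hh]]] := fs_proj hF Dt.
exists k, h; split => //; by have [] := pff_epi hP Dh.
Qed.


Lemma hx_none n k (x y : thread g) (h : fv (F (k + n)%coq_nat) -> fv (split_graph (co x n) (co y n))) :
  epimorphism h -> co x n <> co y n -> lim_edge x y ->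
  (forall w, @collapse _ (co x n) (co y n) (co x n) (h w) = fcomp g w) ->
  h (co x (k + n)%coq_nat) = None /\ h (co y (k + n)%coq_nat) = Some (co y n).
Proof.
move=> eh xy le Hh.
have hy : h (co y (k + n)%coq_nat) = Some (co y n).
  apply: (@collapse_some _ (co x n) (co y n) (co x n)); first by rewrite Hh; exact: fcomp_co.
  by move=> E; apply: xy.
split => //.
have := epi_edge eh (le (k + n)%coq_nat); rewrite hy.
case E: (h _) => [u|] //.
have : u = co x n.
  by have := Hh (co x (k + n)%coq_nat); rewrite E /= => ->; exact: fcomp_co.
move=> ->; rewrite /fe /= /split_e eqxx /=.
by rewrite eqxx /= orbF => /andP [_ /eqP].
Qed.

Lemma nbr (x y z : thread g) : lim_edge x y -> x <> y -> lim_edge x z ->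
  z = x \/ z = y.
Proof.
move=> le xy lz; apply: contrapT => /not_orP [zx zy].
have [i1 H1] := thread_neq xy.
have [i2 H2] := thread_neq zx.
have [i3 H3] := thread_neq zy.
pose n := maxn i1 (maxn i2 i3).
have n1 : (i1 <= n)%N by rewrite leq_max leqnn.
have n2 : (i2 <= n)%N by rewrite /n !leq_max leqnn orbT.
have n3 : (i3 <= n)%N by rewrite /n !leq_max leqnn !orbT.
have xyn := H1 n n1.
have [k [h [Dh eh Hh]]] := @split_facts n (co x n) (co y n) (co x n)
   (introN eqP xyn) (le n) (or_introl erefl).
have [hx _] := hx_none eh xyn le Hh.
have hz : h (co z (k + n)%coq_nat) = Some (co z n).
  apply: (@collapse_some _ (co x n) (co y n) (co x n)); first by rewrite Hh; exact: fcomp_co.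
  exact: H2 n n2.
have := epi_edge eh (lz (k + n)%coq_nat); rewrite hx hz /fe /= /split_e.
apply/negP; rewrite negb_or; apply/andP; split; apply/eqP.
  exact: H2 n n2.
exact: H3 n n3.
Qed.

Lemma class2 (x y : thread g) : lim_edge x y -> x <> y ->
  forall z, lim_equiv x z -> z = x \/ z = y.
Proof.
move=> le xy.
have step : forall a b, lim_edge a b -> (a = x \/ a = y) -> (b = x \/ b = y).
  move=> a b lab [Ea|Ea]; subst a.
    exact: nbr le xy lab.
  have := nbr (lim_edge_sym le) (nesym xy) lab; tauto.
have : forall a b, lim_equiv a b -> ((a = x \/ a = y) <-> (b = x \/ b = y)).
  move=> a b; elim => {a b}.
  - move=> a b lab; split; first exact: step.
    by apply: step; apply: lim_edge_sym.
  - by [].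
  - by move=> a b _ [H1 H2]; split.
  - by move=> a b c _ [H1 H2] _ [H3 H4]; split => H; [apply: H3; apply: H1|apply: H2; apply: H4].
move=> H z /H [H1 _]; apply: H1; by left.
Qed.


Lemma comp_K (x y u v : thread g) n :
  lim_edge x y -> co x n <> co y n ->
  (forall z, realize z = realize x -> z = x \/ z = y) ->
  co u n <> co x n -> co v n <> co x n ->
  connect (ered (co x n) (co y n)) (Some (co u n)) (Some (co v n)) ->
  ~~ connect (ered (co x n) (co y n)) (Some (co u n)) (Some (co y n)) ->
  connected_component (~` [set realize x]) (realize u) (realize v).
Proof.
move=> le xy hcl ux vx cuv nuy.
have [k [h [Dh eh Hh]]] := @split_facts n (co x n) (co y n) (co x n)
   (introN eqP xy) (le n) (or_introl erefl).
have [hx hy] := hx_none eh xy le Hh.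
pose M := (k + n)%coq_nat.
have hu : h (co u M) = Some (co u n).
  apply: (@collapse_some _ (co x n) (co y n) (co x n)) => //.
  by rewrite Hh; exact: fcomp_co.
have hv : h (co v M) = Some (co v n).
  apply: (@collapse_some _ (co x n) (co y n) (co x n)) => //.
  by rewrite Hh; exact: fcomp_co.
pose P : {set fv (split_graph (co x n) (co y n))} := [set s | connect (ered (co x n) (co y n)) (Some (co u n)) s]%SET.
have cP : fg_connected P by apply: conn_class => s t /and3P [].
pose Q := [set w | h w \in P]%SET.
have cQ : fg_connected Q := preim_conn eh (hM Dh) cP.
have cK := conn_image (@hg) hfc cQ.
apply: (connected_component_max _ _ cK).
- by exists u => //=; rewrite !inE hu connect0.
- move=> r [z Kz <-] /= E; move: Kz; rewrite /= !inE.
  case: (hcl z E) => ->; first by rewrite hx => /connect_None.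
  by rewrite hy; apply/negP.
- by exists v => //=; rewrite !inE hv.
Qed.

End Main.

Lemma nontriv (F : nat -> FinGraph) (g : forall n, fv (F n.+1) -> fv (F n))
  (u v : thread g) : lim_equiv u v -> u <> v ->
  exists x y, [/\ x <> y, lim_edge x y & lim_equiv u x].
Proof.
elim => {u v}.
- by move=> a b lab ab; exists a, b; split => //; apply: rst_refl.
- by [].
- move=> a b H IH ba; have [x [y [xy le ex]]] := IH (nesym ba).
  exists x, y; split => //; apply: rst_trans ex; exact: rst_sym.
- move=> a b c H1 IH1 H2 IH2 ac; case: (pselect (a = b)) => ab.
    by subst b; apply: IH2.
  have [x [y [xy le ex]]] := IH1 ab; by exists x, y.
Qed.

Theorem mainTheorem2 (T : FinGraph -> Prop)
    (D : forall B A : FinGraph, (fv B -> fv A) -> Prop)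
    (F : nat -> FinGraph) (g : forall n : nat, fv (F n.+1) -> fv (F n)) :
  proj_fraisse_family T D ->
  (forall A : FinGraph, T A -> ftree A) ->
  (forall (B A : FinGraph) (f : fv B -> fv A), D B A f -> monotone f) ->
  allows_splitting T D ->
  fraisse_seq T D g ->
  forall p : realization g, ramification_point p ->
  exists! p' : thread g, realize p' = p.
Proof.
move=> hP hT hM hS hF p [a [b [c [[na nb nc] [nab nac nbc]]]]].
have [x0 Ex0] := realize_surj p.
exists x0; split => // p' Ep'.
apply: contrapT => ne.
have eq0 : lim_equiv x0 p' by apply: realize_inv; rewrite Ex0 Ep'.
have [x [y [xy le ex]]] := nontriv eq0 ne.
have Rx : realize x = p by rewrite -Ex0; symmetry; apply: realize_eq.
have Ry : realize y = p by rewrite -Rx; symmetry; apply: realize_eq; apply: rst_step.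
have hcl : forall z, realize z = realize x -> z = x \/ z = y.
  by move=> z E; apply: (class2 hP hS hF le xy); apply: realize_inv.
have hcly : forall z, realize z = realize y -> z = y \/ z = x.
  move=> z E; have := hcl z; rewrite Rx -Ry; tauto.
have [ua Ea] := realize_surj a.
have [ub Eb] := realize_surj b.
have [uc Ec] := realize_surj c.
have neq : forall u (r : realization g), realize u = r -> r <> p -> u <> x /\ u <> y.
  by move=> u r Er rp; split => E; subst u; apply: rp; rewrite -Er.
have [ax ay] := neq ua a Ea na.
have [bx by_] := neq ub b Eb nb.
have [cx cy] := neq uc c Ec nc.
have [i1 H1] := thread_neq xy.
have [i2 H2] := thread_neq ax.
have [i3 H3] := thread_neq ay.
have [i4 H4] := thread_neq bx.
have [i5 H5] := thread_neq by_.
have [i6 H6] := thread_neq cx.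
have [i7 H7] := thread_neq cy.
pose n := maxn i1 (maxn i2 (maxn i3 (maxn i4 (maxn i5 (maxn i6 i7))))).
have := H1 n; have := H2 n; have := H3 n; have := H4 n; have := H5 n; have := H6 n; have := H7 n.
rewrite /n !leq_max !leqnn !orbT /=.
move=> {H1 H2 H3 H4 H5 H6 H7} /(_ isT) H7 /(_ isT) H6 /(_ isT) H5 /(_ isT) H4
  /(_ isT) H3 /(_ isT) H2 /(_ isT) H1.
set n' := maxn _ _ in H1 H2 H3 H4 H5 H6 H7.
have [TS _ _] := hS _ (fs_mem hF n') (co x n') (co y n') (introN eqP H1) (le n').
have [cS acS] := hT _ TS.
have cover := S_cover cS.
have sep := S_sep acS (introN eqP H1).
pose e := ered (co x n') (co y n').
have csym := sym_connect_sym (@ered_sym _ (co x n') (co y n')).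
pose cls (u : thread g) := connect e (Some (co u n')) (Some (co x n')).
have pair : forall u v, co u n' <> co x n' -> co u n' <> co y n' ->
    co v n' <> co x n' -> co v n' <> co y n' -> cls u = cls v ->
    connected_component (~` [set p]) (realize u) (realize v).
  move=> u v ux uy vx vy; rewrite /cls; case Hu: (connect _ _ _) => Hv.
    rewrite -Rx; apply: (comp_K hP hM hS hF le H1 hcl ux vx).
      by apply: connect_trans Hu _; rewrite csym -Hv.
    apply/negP => cuy; move/negP: sep; apply.
    by apply: connect_trans _ cuy; rewrite csym Hu.
  have cu := cover (co u n'); have cv := cover (co v n').
  rewrite Hu /= in cu; rewrite -Hv /= in cv.
  rewrite -Ry; apply: (comp_K hP hM hS hF (lim_edge_sym le) (nesym H1) hcly uy vy).
    rewrite (eq_connect (@ered_swap _ (co y n') (co x n'))).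
    by apply: connect_trans cu _; rewrite csym.
  by rewrite (eq_connect (@ered_swap _ (co y n') (co x n'))) Hu.
case Ha: (cls ua); case Hb: (cls ub); case Hc: (cls uc).
- by apply: nab; rewrite -Ea -Eb; apply: pair => //; rewrite Ha Hb.
- by apply: nab; rewrite -Ea -Eb; apply: pair => //; rewrite Ha Hb.
- by apply: nac; rewrite -Ea -Ec; apply: pair => //; rewrite Ha Hc.
- by apply: nbc; rewrite -Eb -Ec; apply: pair => //; rewrite Hb Hc.
- by apply: nbc; rewrite -Eb -Ec; apply: pair => //; rewrite Hb Hc.
- by apply: nac; rewrite -Ea -Ec; apply: pair => //; rewrite Ha Hc.
- by apply: nab; rewrite -Ea -Eb; apply: pair => //; rewrite Ha Hb.
- by apply: nab; rewrite -Ea -Eb; apply: pair => //; rewrite Ha Hb.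
Qed.
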